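(* Let $P(t)$ and $Q(t)$ be real polynomials of degree at most $2$, and let $I\subset\mathbb{R}$ be an interval such that $P>0$ and $Q>0$ on $I$. Suppose $\Delta_P>0$ and that there is a constant $T>0$ such that (i) $\Delta_Q\ge T^{3/2}\Delta_P$, and (ii) $TP(t)\ge Q(t)$ for all $t\in I$. Then $G(t)=\sqrt{P(t)}-\sqrt{Q(t)}$ is convex on $I$.
   Context: For a real polynomial written as $R(t)=\alpha+2\beta t+\gamma t^2$ (where $\gamma=0$ is allowed), its discriminant is defined as $\Delta_R=\beta^2-\alpha\gamma$. *)

(* Defs.v *)
From Stdlib Require Import Reals Lra.
Open Scope R_scope.

(* The real polynomial R(t) = alpha + 2 beta t + gamma t^2 (gamma = 0 allowed);
   every real polynomial of degree at most 2 has this form. *)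
Definition quad (alpha beta gamma : R) (t : R) : R :=
  alpha + 2 * beta * t + gamma * t ^ 2.

Definition discr (alpha beta gamma : R) : R := beta ^ 2 - alpha * gamma.

Definition is_interval (I : R -> Prop) : Prop :=
  forall x y z, I x -> I y -> x <= z <= y -> I z.

Definition convex_on (I : R -> Prop) (f : R -> R) : Prop :=
  forall x y l, I x -> I y -> 0 <= l <= 1 ->
    f (l * x + (1 - l) * y) <= l * f x + (1 - l) * f y.

(* Main.v *)
Require Import Defs.
From Stdlib Require Import Reals.
From Stdlib Require Import Lra Psatz.
From Coquelicot Require Import Coquelicot.
Open Scope R_scope.

Lemma d1_sqrt_quad a b c t : 0 < quad a b c t ->
  is_derive (fun t => sqrt (quad a b c t)) t ((b + c*t) / sqrt (quad a b c t)).
Proof.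
  intros H. unfold quad in *. auto_derive;
  replace (t*(t*1)) with (t^2) by ring.
  - exact H.
  - assert (Hs : 0 < sqrt (a + 2 * b * t + c * t ^ 2)) by (apply sqrt_lt_R0; exact H).
    field. lra.
Qed.

Lemma d2_sqrt_quad a b c t : 0 < quad a b c t ->
  is_derive (fun t => (b + c*t) / sqrt (quad a b c t)) t
    (- discr a b c / (quad a b c t * sqrt (quad a b c t))).
Proof.
  intros H. unfold quad, discr in *. auto_derive;
  replace (t*(t*1)) with (t^2) by ring;
  assert (Hs : 0 < sqrt (a + 2 * b * t + c * t ^ 2)) by (apply sqrt_lt_R0; exact H).
  - split; [exact H|]. split; [lra|exact I].
  - assert (Hss := sqrt_sqrt _ (Rlt_le _ _ H)).
    set (s := sqrt (a + 2 * b * t + c * t ^ 2)) in *.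
    assert (Hp : a + 2 * b * t + c * t ^ 2 = s * s) by (symmetry; exact Hss).
    rewrite Hp. field_simplify; [|lra|lra].
    replace (s^2) with (a + 2 * b * t + c * t ^ 2) by (rewrite Hp; ring).
    field. lra.
Qed.

Lemma cont_of_der f df x : is_derive f x df -> continuity_pt f x.
Proof.
  intros H. apply continuity_pt_filterlim.
  apply (ex_derive_continuous (K:=R_AbsRing) (V:=R_NormedModule)).
  exists df. exact H.
Qed.

Lemma mvt_I (I : R -> Prop) g g' (hI : is_interval I)
  (hd : forall t, I t -> is_derive g t (g' t)) x y :
  I x -> I y -> x <= y -> exists c, x <= c <= y /\ g y - g x = g' c * (y - x).
Proof.
  intros Hx Hy Hxy.
  destruct (MVT_gen g x y g') as [c [Hc E]].
  - intros u Hu. apply hd. rewrite Rmin_left in Hu by lra. rewrite Rmax_right in Hu by lra.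
    apply (hI x y); auto; lra.
  - intros u Hu. apply (cont_of_der _ (g' u)). apply hd.
    rewrite Rmin_left in Hu by lra. rewrite Rmax_right in Hu by lra.
    apply (hI x y); auto.
  - rewrite Rmin_left in Hc by lra. rewrite Rmax_right in Hc by lra.
    exists c. split; auto.
Qed.

Lemma convex_of_d2 (I : R -> Prop) g g' g'' (hI : is_interval I)
  (hd : forall t, I t -> is_derive g t (g' t))
  (hd2 : forall t, I t -> is_derive g' t (g'' t))
  (hpos : forall t, I t -> 0 <= g'' t) :
  convex_on I g.
Proof.
  assert (core : forall x y l, I x -> I y -> x < y -> 0 < l < 1 ->
    g (l * x + (1 - l) * y) <= l * g x + (1 - l) * g y).
  { intros x y l Hx Hy Hxy Hl.
    set (z := l * x + (1 - l) * y).
    assert (Hz1 : x < z) by (unfold z; nra).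
    assert (Hz2 : z < y) by (unfold z; nra).
    assert (Iz : I z) by (apply (hI x y); auto; lra).
    destruct (mvt_I I g g' hI hd x z Hx Iz (Rlt_le _ _ Hz1)) as [c1 [Hc1 E1]].
    destruct (mvt_I I g g' hI hd z y Iz Hy (Rlt_le _ _ Hz2)) as [c2 [Hc2 E2]].
    assert (Ic1 : I c1) by (apply (hI x z); auto).
    assert (Ic2 : I c2) by (apply (hI z y); auto).
    destruct (mvt_I I g' g'' hI hd2 c1 c2 Ic1 Ic2 ltac:(lra)) as [e [He E3]].
    assert (Ie : I e) by (apply (hI c1 c2); auto).
    assert (Hge := hpos e Ie).
    assert (Hmon : g' c1 <= g' c2) by nra.
    assert (Ez1 : z - x = (1 - l) * (y - x)) by (unfold z; ring).
    assert (Ez2 : y - z = l * (y - x)) by (unfold z; ring).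
    rewrite Ez1 in E1. rewrite Ez2 in E2.
    assert (Hdiff : l * g x + (1 - l) * g y - g z =
      l * (1 - l) * (y - x) * (g' c2 - g' c1)) by nra.
    assert (0 <= l * (1 - l) * (y - x) * (g' c2 - g' c1)).
    { apply Rmult_le_pos; [|lra]. apply Rmult_le_pos; [|lra]. nra. }
    lra. }
  intros x y l Hx Hy Hl.
  destruct (Req_dec l 0) as [->|Hl0].
  { replace (0 * x + (1 - 0) * y) with y by ring. lra. }
  destruct (Req_dec l 1) as [->|Hl1].
  { replace (1 * x + (1 - 1) * y) with x by ring. lra. }
  destruct (Rtotal_order x y) as [Hxy|[Hxy|Hxy]].
  - apply core; auto; lra.
  - subst. replace (l * y + (1 - l) * y) with y by ring. lra.
  - assert (H := core y x (1 - l) Hy Hx Hxy ltac:(lra)).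
    replace (l * x + (1 - l) * y) with ((1 - l) * y + (1 - (1 - l)) * x) by ring.
    lra.
Qed.

Theorem lemma7 (a b c a' b' c' : R) (I : R -> Prop) (T : R)
  (hI : is_interval I)
  (hP : forall t, I t -> 0 < quad a b c t)
  (hQ : forall t, I t -> 0 < quad a' b' c' t)
  (hDP : 0 < discr a b c)
  (hT : 0 < T)
  (h1 : discr a' b' c' >= Rpower T (3 / 2) * discr a b c)
  (h2 : forall t, I t -> T * quad a b c t >= quad a' b' c' t) :
  convex_on I (fun t => sqrt (quad a b c t) - sqrt (quad a' b' c' t)).
Proof.
  assert (HT : Rpower T (3 / 2) = T * sqrt T).
  { replace (3/2) with (1 + /2) by field. rewrite Rpower_plus, Rpower_1, Rpower_sqrt; auto. }
  rewrite HT in h1.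
  apply (convex_of_d2 I _
    (fun t => (b + c*t) / sqrt (quad a b c t) - (b' + c'*t) / sqrt (quad a' b' c' t))
    (fun t => - discr a b c / (quad a b c t * sqrt (quad a b c t))
              - - discr a' b' c' / (quad a' b' c' t * sqrt (quad a' b' c' t))) hI).
  - intros t Ht. exact (is_derive_minus _ _ _ _ _ (d1_sqrt_quad a b c t (hP t Ht)) (d1_sqrt_quad a' b' c' t (hQ t Ht))).
  - intros t Ht. exact (is_derive_minus _ _ _ _ _ (d2_sqrt_quad a b c t (hP t Ht)) (d2_sqrt_quad a' b' c' t (hQ t Ht))).
  - intros t Ht.
    specialize (hP t Ht). specialize (hQ t Ht). specialize (h2 t Ht).
    set (p := quad a b c t) in *. set (q := quad a' b' c' t) in *.
    set (dp := discr a b c) in *. set (dq := discr a' b' c') in *.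
    assert (sp : 0 < sqrt p) by (apply sqrt_lt_R0; auto).
    assert (sq : 0 < sqrt q) by (apply sqrt_lt_R0; auto).
    assert (sT : 0 < sqrt T) by (apply sqrt_lt_R0; auto).
    assert (Hs : sqrt q <= sqrt T * sqrt p).
    { rewrite <- sqrt_mult by lra. apply sqrt_le_1_alt. lra. }
    assert (Hk : q * sqrt q <= T * sqrt T * (p * sqrt p)).
    { replace (T * sqrt T * (p * sqrt p)) with ((T * p) * (sqrt T * sqrt p)) by ring.
      apply Rmult_le_compat; lra. }
    assert (Hge : dp / (p * sqrt p) <= dq / (q * sqrt q)).
    { apply (Rle_trans _ (T * sqrt T * dp / (q * sqrt q))).
      - unfold Rdiv. rewrite (Rmult_comm dp), (Rmult_comm (T * sqrt T * dp)).
        rewrite Rmult_comm.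
        apply (Rmult_le_reg_l (p * sqrt p * (q * sqrt q))).
        + apply Rmult_lt_0_compat; apply Rmult_lt_0_compat; auto.
        + field_simplify; try lra. nra.
      - unfold Rdiv. apply Rmult_le_compat_r.
        + left. apply Rinv_0_lt_compat. apply Rmult_lt_0_compat; auto.
        + lra. }
    unfold Rdiv in *. lra.
Qed.
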